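(* Let $(G,v)$ be a Hamel space over an ordered field $C$. Then $v(G\setminus\{0\})$ is a $C$-linearly independent subset of $G$.
   Context: Let $C$ be an ordered field. A $2$-ordered $C$-vector space is a $C$-vector space $G$ with two total orderings $<_0,<_1$ such that $G$ is an ordered $C$-vector space with respect to each. Put $G_\infty=G\cup\{\infty\}$, with $G<_0\infty$, $G<_1\infty$. A Hamel valuation on $G$ is a map $v:G\to G_\infty$ such that for all $x,y\in G$ and $\lambda\in C^{\times}$: $v(x)=\infty$ iff $x=0$; $v(x+y)\ge_0\min_0(v(x),v(y))$; $v(\lambda x)=v(x)$; if $0<_1x<_1y$ then $v(x)\ge_0v(y)$; $v(v(x))=v(x)$ (with $v(\infty)=\infty$); and $v(x)>_10$. A Hamel space is such a pair $(G,v)$. *)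

(* Defs.v *)
From HB Require Import structures.
From mathcomp Require Import all_boot all_order all_algebra.
From Stdlib Require Import ClassicalEpsilon.
Set Implicit Arguments. Unset Strict Implicit. Unset Printing Implicit Defensive.
Import Order.TTheory GRing.Theory Num.Theory.
Local Open Scope ring_scope.

Definition ordered_vspace_order (C : realFieldType) (G : lmodType C)
    (lt : G -> G -> Prop) : Prop :=
  [/\ (forall x, ~ lt x x),
      (forall x y z, lt x y -> lt y z -> lt x z),
      (forall x y, [\/ lt x y, x = y | lt y x]),
      (forall x y z, lt x y -> lt (x + z) (y + z)) &
      (forall (l : C) x, 0 < l -> lt 0 x -> lt 0 (l *: x))].

(* G_oo = G u {oo} is modelled by [option G], [None] being oo. *)
Definition ltinf (G : Type) (lt : G -> G -> Prop) (a b : option G) : Prop :=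
  match a, b with
  | Some x, Some y => lt x y
  | Some _, None => True
  | None, _ => False
  end.

Definition leinf (G : Type) (lt : G -> G -> Prop) (a b : option G) : Prop :=
  a = b \/ ltinf lt a b.

Definition mininf (G : Type) (lt : G -> G -> Prop) (a b : option G) : option G :=
  if excluded_middle_informative (ltinf lt b a) then b else a.

Definition vext (G : Type) (v : G -> option G) (a : option G) : option G :=
  match a with Some x => v x | None => None end.

Definition hamel_valuation (C : realFieldType) (G : lmodType C)
    (lt0 lt1 : G -> G -> Prop) (v : G -> option G) : Prop :=
  (forall x, v x = None <-> x = 0) /\
  [/\ (forall x y, leinf lt0 (mininf lt0 (v x) (v y)) (v (x + y))),
      (forall (l : C) x, l != 0 -> v (l *: x) = v x),
      (forall x y, lt1 0 x -> lt1 x y -> leinf lt0 (v y) (v x)),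
      (forall x, vext v (v x) = v x) &
      (forall x, ltinf lt1 (Some 0) (v x))].

Definition hamel_space (C : realFieldType) (G : lmodType C)
    (lt0 lt1 : G -> G -> Prop) (v : G -> option G) : Prop :=
  [/\ ordered_vspace_order lt0, ordered_vspace_order lt1 & hamel_valuation lt0 lt1 v].

Definition lin_indep (C : realFieldType) (G : lmodType C) (S : G -> Prop) : Prop :=
  forall (s : seq G) (c : G -> C),
    uniq s -> (forall x, x \in s -> S x) ->
    \sum_(x <- s) c x *: x = 0 -> forall x, x \in s -> c x = 0.

(* Main.v *)
Require Import Defs.
From HB Require Import structures.
From mathcomp Require Import all_boot all_order all_algebra.
From Stdlib Require Import ClassicalEpsilon.
Import Order.TTheory GRing.Theory Num.Theory.
Local Open Scope ring_scope.
Set Implicit Arguments.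

Section Aux.
Variables (G : Type) (lt : G -> G -> Prop).
Hypothesis irr : forall x, ~ lt x x.
Hypothesis tr : forall x y z, lt x y -> lt y z -> lt x z.
Hypothesis tot : forall x y, [\/ lt x y, x = y | lt y x].

Lemma ltinf_irr a : ~ ltinf lt a a.
Proof. by case: a => [x|] //=; apply: irr. Qed.

Lemma ltinf_trans a b c : ltinf lt a b -> ltinf lt b c -> ltinf lt a c.
Proof. by case: a => [x|]; case: b => [y|]; case: c => [z|] //=; apply: tr. Qed.

Lemma ltinf_tot a b : [\/ ltinf lt a b, a = b | ltinf lt b a].
Proof.
case: a => [x|]; case: b => [y|] /=; try by [constructor 1|constructor 2|constructor 3].
by case: (tot x y) => [h|->|h]; [constructor 1|constructor 2|constructor 3].
Qed.

Lemma mininf_cases a b : mininf lt a b = a \/ mininf lt a b = b.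
Proof. by rewrite /mininf; case: excluded_middle_informative; [right|left]. Qed.

Lemma mininf_l a b : ltinf lt a b -> mininf lt a b = a.
Proof.
move=> h; rewrite /mininf; case: excluded_middle_informative => // h'.
by case: (ltinf_irr _ (ltinf_trans _ _ _ h h')).
Qed.
End Aux.

Theorem lemma4p3 (C : realFieldType) (G : lmodType C)
    (lt0 lt1 : G -> G -> Prop) (v : G -> option G) :
  hamel_space lt0 lt1 v ->
  lin_indep (fun g : G => exists x : G, x != 0 /\ v x = Some g).
Proof.
case=> [[irr tr tot _ _] _ [vN [vadd vsc _ vv vpos]]].
have vopp y : v (- y) = v y.
  by rewrite -scaleN1r vsc // oppr_eq0 oner_eq0.
have strict x y : ltinf lt0 (v x) (v y) -> v (x + y) = v x.
  move=> hxy.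
  have h1 := vadd x y; rewrite (@mininf_l G lt0 irr tr _ _ hxy) in h1.
  case: h1 => [//|h1].
  have h2 := vadd (x + y) (- y); rewrite vopp addrK in h2.
  have h3 : ltinf lt0 (v x) (mininf lt0 (v (x + y)) (v y)).
    by case: (@mininf_cases _ lt0 (v (x + y)) (v y)) => ->.
  case: h2 => [e|h2].
    by rewrite e in h3; case: (@ltinf_irr G lt0 irr _ h3).
  by case: (@ltinf_irr G lt0 irr _ (@ltinf_trans G lt0 tr _ _ _ h3 h2)).
have dist x y : v x <> v y -> v (x + y) = v x \/ v (x + y) = v y.
  move=> ne; case: (@ltinf_tot G lt0 tot (v x) (v y)) => [h|//|h].
  - by left; apply: strict.
  - by right; rewrite addrC; apply: strict.
move=> s c us Ss.
have key : (forall x, x \in s -> c x = 0) \/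
   exists2 x, x \in s & v (\sum_(y <- s) c y *: y) = Some x.
  elim: s us Ss => [|a s IH] /= us Ss; first by left.
  case/andP: us => nas us.
  have Ss' : forall x, x \in s -> exists y, y != 0 /\ v y = Some x.
    by move=> x xs; apply: Ss; rewrite inE xs orbT.
  have [y [_ vy]] := Ss a (mem_head a s).
  have va : v a = Some a by rewrite -[RHS]vy -(vv y) vy.
  rewrite big_cons.
  have [ca0|ca0] := eqVneq (c a) 0.
    rewrite ca0 scale0r add0r.
    case: (IH us Ss') => [h|[x xs hx]].
      by left => x; rewrite inE => /orP[/eqP->|/h].
    by right; exists x => //; rewrite inE xs orbT.
  right.
  have vca : v (c a *: a) = Some a by rewrite vsc.
  case: (IH us Ss') => [h|[x xs hx]].
    exists a; first exact: mem_head.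
    rewrite big_seq_cond big1 ?addr0 //.
    by move=> i /andP[/h -> _]; rewrite scale0r.
  have ne : v (c a *: a) <> v (\sum_(y <- s) c y *: y).
    rewrite vca hx => [[e]]; move: nas; rewrite e xs //.
  case: (dist _ _ ne) => ->.
    by exists a => //; apply: mem_head.
  by exists x => //; rewrite inE xs orbT.
move=> s0 x xs; case: key => [h|[y ys hy]]; first exact: h.
by move: hy; rewrite s0 (proj2 (vN 0) erefl).
Qed.
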